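(* Let $(r_n)_{n\ge0},(b_n)_{n\ge0},(d_n)_{n\ge0}$ be arbitrary sequences of real numbers and $H_n=i^n\begin{pmatrix}r_n&ib_n\\-ib_n&d_n\end{pmatrix}$. Then there exist real signed Borel measures $\rho_{11},\rho_{12},\rho_{22}$ on $\mathbb R$, each a difference of two positive Borel measures having finite moments of all orders, such that the matrix measure $d\bar\rho=\begin{pmatrix}d\rho_{11}&i\,d\rho_{12}\\-i\,d\rho_{12}&d\rho_{22}\end{pmatrix}$ satisfies $\int_{\mathbb R}(i\mu)^n\,d\bar\rho(\mu)=H_n$ for all $n\ge0$. Equivalently, the function $S(\lambda)=I-\int_{\mathbb R}\frac{1}{\lambda-i\mu}\,d\bar\rho(\mu)\,\sigma_1$ has $n$-th moments $H^S_n:=\int_{\mathbb R}(i\mu)^nd\bar\rho(\mu)$ equal to $H_n$.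
   Context: $\sigma_1$ denotes a fixed invertible self-adjoint $2\times2$ matrix (in the paper, $\sigma_1=\begin{pmatrix}0&1\\1&0\end{pmatrix}$). *)

(* Defs.v *)
From HB Require Import structures.
From mathcomp Require Import all_boot all_order all_algebra.
From mathcomp Require Import all_classical all_reals all_analysis.
From mathcomp Require Import complex.
Set Implicit Arguments. Unset Strict Implicit. Unset Printing Implicit Defensive.
Import Order.TTheory GRing.Theory Num.Theory.
Import numFieldNormedType.Exports.
Local Open Scope classical_set_scope.
Local Open Scope ring_scope.
Local Open Scope complex_scope.

(* The real line with its Borel sigma-algebra (generated by the intervals ]a,b]). *)
Notation RB R := (measurableTypeR R).

Definition finite_moments (R : realType) (mu : {measure set (RB R) -> \bar R}) :=
  forall n : nat, mu.-integrable setT (fun x : RB R => ((x : R) ^+ n)%:E).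

Definition cintegral (R : realType) (mu : {measure set (RB R) -> \bar R})
  (f : R -> R[i]) : R[i] :=
  (Rintegral mu setT (fun x : RB R => complex.Re (f x)))%:C
  + 'i * (Rintegral mu setT (fun x : RB R => complex.Im (f x)))%:C.

(* A real signed measure given as a difference rho = mup - mum of positive
   measures; integral of a complex function against it. *)
Definition scintegral (R : realType) (mup mum : {measure set (RB R) -> \bar R})
  (f : R -> R[i]) : R[i] :=
  cintegral mup f - cintegral mum f.

Definition mxintegral (R : realType)
  (p11 m11 p12 m12 p22 m22 : {measure set (RB R) -> \bar R})
  (f : R -> R[i]) : 'M[R[i]]_2 :=
  \matrix_(j < 2, k < 2)
    if (j == 0) && (k == 0) then scintegral p11 m11 f
    else if (j == 0) && (k == 1) then 'i * scintegral p12 m12 f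
    else if (j == 1) && (k == 0) then - 'i * scintegral p12 m12 f
    else scintegral p22 m22 f.

Definition Hmat (R : realType) (r b d : nat -> R) (n : nat) : 'M[R[i]]_2 :=
  'i ^+ n *: \matrix_(j < 2, k < 2)
    if (j == 0) && (k == 0) then (r n)%:C
    else if (j == 0) && (k == 1) then 'i * (b n)%:C
    else if (j == 1) && (k == 0) then - 'i * (b n)%:C
    else (d n)%:C.

(* Main.v *)
Require Import Defs.
From HB Require Import structures.
From mathcomp Require Import all_boot all_order all_algebra.
From mathcomp Require Import all_classical all_reals all_analysis.
From mathcomp Require Import complex.
From mathcomp Require Import measurable_realfun.
From mathcomp Require Import ring lra.
Import Order.TTheory GRing.Theory Num.Theory.
Import numFieldNormedType.Exports.
Local Open Scope ring_scope.
Local Open Scope complex_scope.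

Module Aux.
Local Open Scope classical_set_scope.
Local Open Scope ring_scope.
Section D.
Variable R : comRingType.
Definition Dk (k n : nat) : R :=
  \sum_(i < k.+1) ((-1) ^+ (k - i) * (i%:R) ^+ n) *+ 'C(k, i).

Lemma Dk0 k : Dk k.+1 0 = 0.
Proof.
rewrite /Dk.
transitivity (((-1 : R) + 1) ^+ k.+1); last by rewrite addNr expr0n.
rewrite exprDn; apply: eq_bigr => i _; by rewrite !expr1n !mulr1.
Qed.

Lemma myexp (m n : nat) : (m.+1%:R : R) ^+ n = \sum_(j < n.+1) m%:R ^+ j *+ 'C(n, j).
Proof. by rewrite -natr1 exprD1n. Qed.

Lemma DkS k n : Dk k.+1 n.+1 = k.+1%:R * \sum_(j < n.+1) Dk k j *+ 'C(n, j).
Proof.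
rewrite /Dk big_ord_recl /= expr0n /= mulr0 mul0rn add0r.
have E i : ((-1 : R) ^+ (k.+1 - (bump 0 i)) * ((bump 0 i)%:R) ^+ n.+1) *+ 'C(k.+1, bump 0 i)
   = k.+1%:R * (((-1) ^+ (k - i) * (i%:R + 1) ^+ n) *+ 'C(k, i)).
  rewrite /bump /= add1n subSS exprSr.
  have h : (i.+1%:R * 'C(k.+1,i.+1)%:R : R) = k.+1%:R * 'C(k,i)%:R.
    by rewrite -!natrM -mul_bin_diag.
  rewrite natr1 -(mulr_natr _ 'C(k.+1,i.+1)) -(mulr_natr _ 'C(k,i)).
  transitivity ((-1) ^+ (k - i) * i.+1%:R ^+ n * (i.+1%:R * 'C(k.+1,i.+1)%:R) : R).
    by ring.
  by rewrite h; ring.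
rewrite (eq_bigr _ (fun (i : 'I_k.+1) _ => E i)).
rewrite -mulr_sumr; congr (_ * _).
transitivity (\sum_(i < k.+1) \sum_(j < n.+1) (((-1 : R) ^+ (k - i) * i%:R ^+ j) *+ 'C(n, j)) *+ 'C(k, i)).
  apply: eq_bigr => i _; rewrite natr1 myexp mulr_sumr -sumrMnl; apply: eq_bigr => j _.
  by rewrite mulrnAr.
rewrite exchange_big /=; apply: eq_bigr => j _.
rewrite -sumrMnl; apply: eq_bigr => i _.
by rewrite -!mulrnA mulnC.
Qed.

Lemma Dk_lt n k : (n < k)%N -> Dk k n = 0.
Proof.
elim/ltn_ind: n k => n IH [//|k] nk.
case: n IH nk => [|n] IH nk; first exact: Dk0.
rewrite DkS big1 ?mulr0// => j _.
rewrite IH ?mul0rn//.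
exact: leq_trans (ltn_ord j) nk.
Qed.

Lemma Dk_eq n : Dk n n = n`!%:R.
Proof.
elim: n => [|n IH]; first by rewrite /Dk big_ord1 /= !expr0 mulr1 mulr1n.
rewrite DkS big_ord_recr /= big1 => [|j _]; last by rewrite Dk_lt ?mul0rn.
by rewrite add0r IH binn mulr1n factS natrM.
Qed.
End D.

Section disc.
Variable R : realType.
Variables (N : nat -> nat) (w : nat -> nat -> {nonneg R}) (x : nat -> nat -> R).
Definition dnu k : {measure set (measurableTypeR R) -> \bar R} :=
  msum (fun i => mscale (w k i) (@dirac _ (measurableTypeR R) (x k i) R)) (N k).
Definition dmu : {measure set (measurableTypeR R) -> \bar R} := mseries dnu 0.

Lemma dmu_int (g : measurableTypeR R -> \bar R) : (forall t, 0 <= g t)%E ->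
  measurable_fun [set: measurableTypeR R] g ->
  (\int[dmu]_(t in [set: measurableTypeR R]) g t =
   \sum_(k <oo) \sum_(i < N k) (w k i)%:num%:E * g (x k i))%E.
Proof.
move=> g0 mg.
rewrite ge0_integral_measure_series//; apply: eq_eseriesr => k _.
rewrite ge0_integral_measure_sum//; apply: eq_bigr => i _.
rewrite ge0_integral_mscale//; congr (_ * _)%E.
by rewrite integral_dirac// diracE in_setT mul1e.
Qed.

Lemma dmu_mom (x0 : forall k i, 0 <= x k i) n :
  (\sum_(k <oo) (\sum_(i < N k) (w k i)%:num * x k i ^+ n)%:E < +oo)%E ->
  dmu.-integrable setT (fun t : measurableTypeR R => (t ^+ n)%:E) /\
  Rintegral dmu setT (fun t : measurableTypeR R => t ^+ n) =
  fine (\sum_(k <oo) (\sum_(i < N k) (w k i)%:num * x k i ^+ n)%:E)%E.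
Proof.
move=> fin.
have mf : measurable_fun [set: measurableTypeR R] (fun t : measurableTypeR R => (t ^+ n)%:E).
  by apply/measurable_EFinP; exact: exprn_measurable.
have eqS : (\sum_(k <oo) \sum_(i < N k) (w k i)%:num%:E * ((x k i) ^+ n)%:E =
           \sum_(k <oo) (\sum_(i < N k) (w k i)%:num * x k i ^+ n)%:E)%E.
  apply: eq_eseriesr => k _; rewrite -sumEFin; apply: eq_bigr => i _.
  by rewrite EFinM.
split.
  apply/integrableP; split => //.
  rewrite dmu_int//; last exact: measurableT_comp.
  apply: le_lt_trans fin; rewrite -eqS le_eqVlt; apply/orP; left; apply/eqP.
  apply: eq_eseriesr => k _; apply: eq_bigr => i _.
  by rewrite abse_EFin ger0_norm// exprn_ge0.
rewrite /Rintegral integralE dmu_int//; last exact: measurable_funepos.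
rewrite dmu_int//; last exact: measurable_funeneg.
rewrite [X in (_ - X)%E]eseries0; last first.
  move=> k _ _; apply: big1 => i _; rewrite funenegE.
  have -> : maxe (- ((x k i) ^+ n)%:E)%E 0%E = 0%E.
    by apply/max_idPr; rewrite oppe_le0 lee_fin exprn_ge0.
  by rewrite mule0.
rewrite sube0 -eqS; congr fine; apply: eq_eseriesr => k _; apply: eq_bigr => i _.
by rewrite funeposE; congr (_ * _)%E; apply/max_idPl; rewrite lee_fin exprn_ge0.
Qed.
End disc.

Section series.
Variable R : realType.

Lemma fin_geo (u : nat -> R) m : (forall k, 0 <= u k) ->
  (forall k, (m <= k)%N -> u k <= (2 ^+ k.+1)^-1) ->
  (\sum_(k <oo) (u k)%:E < +oo)%E.
Proof.
move=> u0 ub.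
set C : R := 1 + \sum_(j < m) u j * 2 ^+ j.+1.
have C1 : 1 <= C by rewrite /C lerDl sumr_ge0// => j _; rewrite mulr_ge0// exprn_ge0.
have bnd k : u k <= C / (2 ^ (k + 1))%:R.
  rewrite natrX addn1 ler_pdivlMr ?exprn_gt0//.
  case: (ltnP k m) => km.
    apply: (@le_trans _ _ (\sum_(j < m) u j * 2 ^+ j.+1)); last by rewrite /C lerDr.
    by rewrite (bigD1 (Ordinal km))//= lerDl sumr_ge0// => j _; rewrite mulr_ge0// exprn_ge0.
  have := ub k km; rewrite -ler_pdivlMr ?exprn_gt0// => h.
  apply: le_trans h _; rewrite -[X in X <= _]mul1r ler_wpM2r// invr_ge0 exprn_ge0//.
apply: (@le_lt_trans _ _ (C / 2 ^+ 0)%:E); last by rewrite ltry.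
have := @cvg_geometric_eseries_half R C 0 => /cvg_lim <-//.
apply: lee_nneseries => [k _|k _]; first by rewrite lee_fin.
by rewrite lee_fin.
Qed.

Lemma fine_diff (u v : nat -> R) m : (forall k, 0 <= u k) -> (forall k, 0 <= v k) ->
  (\sum_(k <oo) (u k)%:E < +oo)%E -> (\sum_(k <oo) (v k)%:E < +oo)%E ->
  (forall k, (m <= k)%N -> u k = v k) ->
  fine (\sum_(k <oo) (u k)%:E)%E - fine (\sum_(k <oo) (v k)%:E)%E = \sum_(k < m) (u k - v k).
Proof.
move=> u0 v0 fu fv uv.
rewrite (nneseries_split 0 m); last by move=> k _; rewrite lee_fin.
rewrite [in X in _ - fine X](nneseries_split 0 m); last by move=> k _; rewrite lee_fin.
have -> : (\sum_(0 + m <= k <oo) (v k)%:E = \sum_(0 + m <= k <oo) (u k)%:E)%E.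
  apply: congr_lim; apply/funext => n; apply: eq_big_nat => i /andP[hi _].
  by rewrite uv.
have T0 : (0 <= \sum_(0 + m <= k <oo) (u k)%:E)%E.
  by apply: nneseries_ge0 => k _ _; rewrite lee_fin.
have Tf : (\sum_(0 + m <= k <oo) (u k)%:E)%E \is a fin_num.
  rewrite ge0_fin_numE//; apply: le_lt_trans fu.
  rewrite (nneseries_split 0 m); last by move=> k _; rewrite lee_fin.
  by rewrite leeDr// sume_ge0// => k _; rewrite lee_fin.
rewrite -(fineK Tf) !add0n !sumEFin -!EFinD /= big_mkord big_mkord sumrB.
by ring.
Qed.
End series.

Section construction.
Variables (R : realType) (s : nat -> R).

Definition ee (c : R) (k : nat) : R := 1 + `|c| * 2 ^+ (k + k.+1) * k%:R ^+ k.
Lemma ee_ge1 c k : 1 <= ee c k.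
Proof. by rewrite /ee lerDl !mulr_ge0// exprn_ge0. Qed.
Lemma ee_gt0 c k : 0 < ee c k.
Proof. exact: lt_le_trans ltr01 (ee_ge1 c k). Qed.

Definition mom (c : R) k n := ee c k ^+ n / (k`!%:R * ee c k ^+ k) * Dk R k n.
Lemma mom_lt c k n : (n < k)%N -> mom c k n = 0.
Proof. by move=> nk; rewrite /mom Dk_lt ?mulr0. Qed.
Lemma mom_eq c k : mom c k k = 1.
Proof.
rewrite /mom Dk_eq; have h1 : (k`!%:R : R) != 0 by rewrite pnatr_eq0 -lt0n fact_gt0.
have h2 : ee c k ^+ k != 0 by rewrite expf_neq0// gt_eqF// ee_gt0.
by field; rewrite h1 h2.
Qed.

Fixpoint G (n : nat) : nat -> R :=
  match n with
  | 0 => fun _ => 0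
  | m.+1 => fun k => if k == m then s m - \sum_(j < m) G m j * mom (G m j) j m
                     else G m k
  end.
Definition cc k := G k.+1 k.
Arguments cc : simpl never.
Lemma G_cc m k : (k < m)%N -> G m k = cc k.
Proof.
elim: m => // m IH; rewrite ltnS leq_eqVlt => /orP[/eqP->//|km] /=.
by rewrite ifN ?IH// ltn_eqF.
Qed.
Lemma cc_sum n : \sum_(k < n.+1) cc k * mom (cc k) k n = s n.
Proof.
rewrite big_ord_recr /= mom_eq mulr1.
have -> : cc n = s n - \sum_(j < n) cc j * mom (cc j) j n.
  rewrite /cc /= eqxx; congr (_ - _); apply: eq_bigr => j _.
  by rewrite G_cc.
by ring.
Qed.

Definition Ek k := ee (cc k) k.
Definition v k (i : nat) : R := cc k * ((-1) ^+ (k - i) *+ 'C(k, i)) / (k`!%:R * Ek k ^+ k).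
Definition pt k (i : nat) : R := i%:R * Ek k.

Lemma pt_ge0 k i : 0 <= pt k i.
Proof. by rewrite /pt mulr_ge0// ltW// ee_gt0. Qed.

Lemma block_mom k n : \sum_(i < k.+1) v k i * pt k i ^+ n = cc k * mom (cc k) k n.
Proof.
rewrite /mom /Dk -/(Ek k) !mulr_sumr; apply: eq_bigr => i _.
rewrite /v /pt -(mulr_natr _ 'C(k, i)) -(mulr_natr ((-1) ^+ (k - i) * _) 'C(k, i)).
by rewrite exprMn; ring.
Qed.

Lemma two_pow k : (2 : R) ^+ k = \sum_(i < k.+1) 'C(k, i)%:R.
Proof. by rewrite -[2]/(1 + 1 : R) exprD1n; apply: eq_bigr => i _; rewrite expr1n. Qed.

Lemma block_abs k n : (n < k)%N ->
  \sum_(i < k.+1) `|v k i| * pt k i ^+ n <= (2 ^+ k.+1)^-1.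
Proof.
move=> nk.
have E1 : 1 <= Ek k := ee_ge1 _ _.
have E0 : 0 < Ek k := ee_gt0 _ _.
have K1 : 1 <= k%:R :> R by rewrite ler1n; exact: leq_ltn_trans (leq0n n) nk.
have F1 : 1 <= k`!%:R :> R by rewrite ler1n fact_gt0.
have Enk : Ek k ^+ n * Ek k <= Ek k ^+ k by rewrite -exprSr; exact: ler_weXn2l.
have step (i : 'I_k.+1) : `|v k i| * pt k i ^+ n <= `|cc k| * 'C(k,i)%:R * k%:R ^+ k / Ek k.
  have ink : (i%:R : R) ^+ n <= k%:R ^+ k.
    apply: (@le_trans _ _ (k%:R ^+ n)).
      by rewrite lerXn2r ?nnegrE ?ler_nat// -ltnS.
    by apply: ler_weXn2l => //; exact: ltnW.
  rewrite /v /pt normrM normrM normrMn normr_sign.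
  rewrite [`|_^-1|]ger0_norm; last by rewrite invr_ge0 mulr_ge0 ?exprn_ge0// ltW.
  rewrite exprMn -!mulrA; apply: ler_wpM2l => //; apply: ler_wpM2l => //.
  rewrite ler_pdivlMr// -!mulrA ler_pdivrMl ?mulr_gt0 ?exprn_gt0//.
  apply: (@le_trans _ _ (k%:R ^+ k * Ek k ^+ k)).
    by apply: ler_pM => //; rewrite ?exprn_ge0 ?mulr_ge0 ?exprn_ge0// ltW.
  rewrite [X in _ <= X]mulrC mulrA; apply: ler_wpM2r; first by rewrite exprn_ge0// ltW.
  by rewrite -{1}[k%:R ^+ k]mulr1 ler_wpM2l ?exprn_ge0// (le_trans ler01).
apply: le_trans (ler_sum _ (fun i _ => step i)) _.
rewrite (eq_bigr (fun i : 'I_k.+1 => (`|cc k| * k%:R ^+ k / Ek k) * 'C(k,i)%:R)); last first.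
  by move=> i _; ring.
rewrite -mulr_sumr -two_pow.
rewrite mulrAC ler_pdivrMr// [X in _ <= X]mulrC ler_pdivlMr ?exprn_gt0//.
rewrite /Ek /ee exprD.
set X := `|cc k|; set Y := (2 : R) ^+ k; set Z := (2 : R) ^+ k.+1; set W := k%:R ^+ k.
have : X * Y * W * Z = X * W * Y * Z by ring.
lra.
Qed.

Definition ps (y : R) := (`|y| + y) / 2.
Lemma nrm2 (y : R) : y <= `|y| /\ - y <= `|y|.
Proof. by split; [exact: ler_norm | rewrite -normrN; exact: ler_norm]. Qed.
Lemma max0_ge0 (y : R) : 0 <= ps y.
Proof. by have [h1 h2] := nrm2 y; rewrite /ps; lra. Qed.
Lemma max0_le (y : R) : ps y <= `|y|.
Proof. by have [h1 h2] := nrm2 y; rewrite /ps; lra. Qed.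
Lemma max0_diff (y : R) : ps y - ps (- y) = y.
Proof. by rewrite /ps normrN; lra. Qed.

Definition wp k i : {nonneg R} := NngNum (max0_ge0 (v k i)).
Definition wm k i : {nonneg R} := NngNum (max0_ge0 (- v k i)).
Definition up n k := \sum_(i < k.+1) (wp k i)%:num * pt k i ^+ n.
Definition um n k := \sum_(i < k.+1) (wm k i)%:num * pt k i ^+ n.

Lemma up_ge0 n k : 0 <= up n k.
Proof. by apply: sumr_ge0 => i _; rewrite mulr_ge0// exprn_ge0// pt_ge0. Qed.
Lemma um_ge0 n k : 0 <= um n k.
Proof. by apply: sumr_ge0 => i _; rewrite mulr_ge0// exprn_ge0// pt_ge0. Qed.

Lemma up_fin n : (\sum_(k <oo) (up n k)%:E < +oo)%E.
Proof.
apply: (@fin_geo _ _ n.+1) => [k|k nk]; first exact: up_ge0.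
apply: (@le_trans _ _ (\sum_(i < k.+1) `|v k i| * pt k i ^+ n)); last exact: block_abs.
apply: ler_sum => i _.
by rewrite ler_wpM2r ?exprn_ge0 ?pt_ge0// max0_le.
Qed.
Lemma um_fin n : (\sum_(k <oo) (um n k)%:E < +oo)%E.
Proof.
apply: (@fin_geo _ _ n.+1) => [k|k nk]; first exact: um_ge0.
apply: (@le_trans _ _ (\sum_(i < k.+1) `|v k i| * pt k i ^+ n)); last exact: block_abs.
apply: ler_sum => i _.
by rewrite ler_wpM2r ?exprn_ge0 ?pt_ge0// -normrN max0_le.
Qed.

Lemma upm n k : up n k - um n k = cc k * mom (cc k) k n.
Proof.
rewrite -block_mom /up /um -sumrB; apply: eq_bigr => i _.
by rewrite -mulrBl /= max0_diff.
Qed.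

Definition Pm := dmu R S wp pt.
Definition Mm := dmu R S wm pt.

Lemma PM_mom n : [/\ Pm.-integrable setT (fun t : measurableTypeR R => (t ^+ n)%:E),
  Mm.-integrable setT (fun t : measurableTypeR R => (t ^+ n)%:E) &
  Rintegral Pm setT (fun t : measurableTypeR R => t ^+ n) -
  Rintegral Mm setT (fun t : measurableTypeR R => t ^+ n) = s n].
Proof.
have [ip ep] := @dmu_mom R S wp pt pt_ge0 n (up_fin n).
have [im em] := @dmu_mom R S wm pt pt_ge0 n (um_fin n).
split => //; rewrite ep em.
have H k : (n.+1 <= k)%N -> up n k = um n k.
  by move=> nk; apply/eqP; rewrite -subr_eq0 upm mom_lt ?mulr0.
have := @fine_diff R (up n) (um n) n.+1 (up_ge0 n) (um_ge0 n) (up_fin n) (um_fin n) H.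
rewrite /up /um => ->.
rewrite -[RHS](cc_sum n); apply: eq_bigr => k _; exact: upm.
Qed.
End construction.

Section C.
Variable R : realType.
Lemma cpow (n : nat) (t : R) : ('i * t%:C) ^+ n = 'i ^+ n * (t ^+ n)%:C.
Proof. by rewrite exprMn -(rmorphXn (real_complex R)). Qed.
Lemma ReM (z : R[i]) (r : R) : complex.Re (z * r%:C) = complex.Re z * r.
Proof. case: z => a b /=. ring. Qed.
Lemma ImM (z : R[i]) (r : R) : complex.Im (z * r%:C) = complex.Im z * r.
Proof. case: z => a b /=. ring. Qed.
Lemma recomb (z : R[i]) (r : R) : (complex.Re z * r)%:C + 'i * (complex.Im z * r)%:C = z * r%:C.
Proof. case: z => a b /=. apply/eqP; rewrite eq_complex /=; apply/andP; split; apply/eqP; ring. Qed.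
End C.

Lemma moment_exists (R : realType) (s : nat -> R) :
  exists p m : {measure set (measurableTypeR R) -> \bar R},
    finite_moments p /\ finite_moments m /\
    forall n, Rintegral p setT (fun t : measurableTypeR R => t ^+ n) -
              Rintegral m setT (fun t : measurableTypeR R => t ^+ n) = s n.
Proof.
exists (Pm R s), (Mm R s); split; [|split].
- by move=> n; have [] := PM_mom R s n.
- by move=> n; have [] := PM_mom R s n.
- by move=> n; have [] := PM_mom R s n.
Qed.

Lemma scint (R : realType) (p m : {measure set (measurableTypeR R) -> \bar R}) (s : nat -> R) :
  finite_moments p -> finite_moments m ->
  (forall n, Rintegral p setT (fun t : measurableTypeR R => t ^+ n) -
             Rintegral m setT (fun t : measurableTypeR R => t ^+ n) = s n) ->
  forall n, scintegral p m (fun mu : R => ('i * mu%:C) ^+ n) = 'i ^+ n * (s n)%:C.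
Proof.
move=> fp fm hs n.
have E1 : (fun x : measurableTypeR R => complex.Re (('i * x%:C) ^+ n)) =
          (fun x => complex.Re ('i ^+ n : R[i]) * x ^+ n).
  by apply/funext => x; rewrite cpow ReM mulrC.
have E2 : (fun x : measurableTypeR R => complex.Im (('i * x%:C) ^+ n)) =
          (fun x => complex.Im ('i ^+ n : R[i]) * x ^+ n).
  by apply/funext => x; rewrite cpow ImM mulrC.
have ip : p.-integrable setT (EFin \o (fun x : measurableTypeR R => x ^+ n)) := fp n.
have im : m.-integrable setT (EFin \o (fun x : measurableTypeR R => x ^+ n)) := fm n.
rewrite /scintegral /cintegral E1 E2 !RintegralZl//.
rewrite -(hs n) -[in RHS]recomb.
set a := complex.Re _; set b := complex.Im _.
set P := Rintegral _ _ _; set M := Rintegral _ _ _.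
apply/eqP; rewrite eq_complex /=; apply/andP; split; apply/eqP; ring.
Qed.
End Aux.
Import Aux.

Theorem mainTheorem11 (R : realType) (r b d : nat -> R) :
  exists p11 m11 p12 m12 p22 m22 : {measure set (measurableTypeR R) -> \bar R},
    (finite_moments p11 /\ finite_moments m11 /\ finite_moments p12 /\
     finite_moments m12 /\ finite_moments p22 /\ finite_moments m22) /\
    forall n : nat,
      mxintegral p11 m11 p12 m12 p22 m22 (fun mu : R => ('i * mu%:C) ^+ n)
      = Hmat r b d n.
Proof.
have [p11 [m11 [f1 [g1 h1]]]] := moment_exists _ r.
have [p12 [m12 [f2 [g2 h2]]]] := moment_exists _ b.
have [p22 [m22 [f3 [g3 h3]]]] := moment_exists _ d.
exists p11, m11, p12, m12, p22, m22; split; first by [].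
move=> n; apply/matrixP => j k; rewrite /mxintegral /Hmat !mxE.
rewrite (@scint _ _ _ _ f1 g1 h1) (@scint _ _ _ _ f2 g2 h2) (@scint _ _ _ _ f3 g3 h3).
case: j => [[|[|//]]] ?; case: k => [[|[|//]]] ? /=.
- by [].
- by rewrite mulrCA.
- by rewrite mulrCA.
- by [].
Qed.
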